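(* Let $X,Y,Z\in\mathbb{Z}[i]$ satisfy $X^2+Y^2=Z^2$, $\gcd(X,Y)\in U$, $XYZ\neq 0$, with $X,Z\in O^I$ and $Y\in (1+i)^2G$ (i.e. $Y=(1+i)^{2}W$ with $W\in G$). Then there exist an integer $t$ with $0\le t\le 3$ and $P,Q\in G$ with $\gcd(P,Q)=1$ and $PQ\equiv 0 \pmod{1+i}$ such that $$X=i^{t+1}\big(P^2-(-1)^tQ^2\big),\quad Y=(1+i)^2PQ,\quad Z=i^{t+1}\big(P^2+(-1)^tQ^2\big).$$
   Context: $\mathbb{Z}[i]$ is the ring of Gaussian integers, $U=\{1,-1,i,-i\}$ its unit group; $R(\alpha),I(\alpha)$ are real and imaginary parts. $\gcd(x,y)\in U$ means $x,y$ have no common non-unit divisor; for $P,Q\in G$, $\gcd(P,Q)=1$ means $P,Q$ have no common prime factor. $O=\{\alpha: R(\alpha)+I(\alpha)\equiv1\pmod 2\}$, $O^I=\{\alpha\in O: R(\alpha)\equiv 1\pmod 4\}$. $G$ is the set of Gaussian integers of the form $(1+i)^{a_1}p_2^{a_2}\cdots p_m^{a_m}$ with integers $a_j\ge 0$ and $p_2,\dots,p_m$ distinct Gaussian primes lying in $O^I$ (the empty product $1$ included). *)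

(* Defs.v *)
From HB Require Import structures.
From mathcomp Require Import all_boot all_order all_algebra.
From mathcomp Require Import ring.
Set Implicit Arguments. Unset Strict Implicit. Unset Printing Implicit Defensive.
Import Order.TTheory GRing.Theory Num.Theory.
Local Open Scope ring_scope.

Record gint := GInt { gre : int; gim : int }.

Definition gint_to (z : gint) : int * int := (gre z, gim z).
Definition gint_of (p : int * int) : gint := GInt p.1 p.2.
Lemma gint_toK : cancel gint_to gint_of. Proof. by case. Qed.

HB.instance Definition _ := Equality.copy gint (can_type gint_toK).
HB.instance Definition _ := Choice.copy gint (can_type gint_toK).
HB.instance Definition _ := Countable.copy gint (can_type gint_toK).

Definition gzero := GInt 0 0.
Definition gone := GInt 1 0.
Definition gadd (x y : gint) := GInt (gre x + gre y) (gim x + gim y).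
Definition gopp (x : gint) := GInt (- gre x) (- gim x).
Definition gmul (x y : gint) :=
  GInt (gre x * gre y - gim x * gim y) (gre x * gim y + gim x * gre y).

Lemma gaddA : associative gadd.
Proof. by move=> [a b] [c d] [e f]; rewrite /gadd /= !addrA. Qed.
Lemma gaddC : commutative gadd.
Proof. by move=> [a b] [c d]; rewrite /gadd /= addrC [b + _]addrC. Qed.
Lemma gadd0 : left_id gzero gadd.
Proof. by move=> [a b]; rewrite /gadd /= !add0r. Qed.
Lemma gaddN : left_inverse gzero gopp gadd.
Proof. by move=> [a b]; rewrite /gadd /= !addNr. Qed.

HB.instance Definition _ := GRing.isZmodule.Build gint gaddA gaddC gadd0 gaddN.

Lemma gmulA : associative gmul.
Proof. by move=> [a b] [c d] [e f]; rewrite /gmul /=; congr GInt; ring. Qed.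
Lemma gmulC : commutative gmul.
Proof. by move=> [a b] [c d]; rewrite /gmul /=; congr GInt; ring. Qed.
Lemma gmul1 : left_id gone gmul.
Proof. by move=> [a b]; rewrite /gmul /=; congr GInt; ring. Qed.
Lemma gmulD : left_distributive gmul gadd.
Proof. by move=> [a b] [c d] [e f]; rewrite /gmul /gadd /=; congr GInt; ring. Qed.
Lemma gone_neq0 : gone != gzero. Proof. by []. Qed.

HB.instance Definition _ :=
  GRing.Zmodule_isComNzRing.Build gint gmulA gmulC gmul1 gmulD gone_neq0.

Definition gI : gint := GInt 0 1.

Definition gdvd (d x : gint) : Prop := exists k : gint, x = d * k.

(* units U = {1,-1,i,-i}: the divisors of 1 *)
Definition gunit (u : gint) : Prop := gdvd u 1.

Definition gprime (p : gint) : Prop :=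
  p <> 0 /\ ~ gunit p /\
  forall a b : gint, gdvd p (a * b) -> gdvd p a \/ gdvd p b.

(* gcd(x,y) in U: every common divisor is a unit *)
Definition gcd_unit (x y : gint) : Prop :=
  forall d : gint, gdvd d x -> gdvd d y -> gunit d.

Definition inO (a : gint) : Prop := ((gre a + gim a) %% 2)%Z = 1.
Definition inOI (a : gint) : Prop := inO a /\ (gre a %% 4)%Z = 1.

Definition inG (x : gint) : Prop :=
  exists (a1 : nat) (s : seq (gint * nat)),
    uniq (map fst s) /\
    (forall pa, pa \in s -> gprime pa.1 /\ inOI pa.1) /\
    x = (1 + gI) ^+ a1 * \prod_(pa <- s) pa.1 ^+ pa.2.

(* gcd(P,Q) = 1 for P,Q in G: no common prime factor *)
Definition no_common_prime (P Q : gint) : Prop :=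
  ~ exists p : gint, gprime p /\ gdvd p P /\ gdvd p Q.

(* Main.v *)
Require Import Defs.
From HB Require Import structures.
From mathcomp Require Import all_boot all_order all_algebra zify ring lra.
From Stdlib Require Import Classical.
Import Order.TTheory GRing.Theory Num.Theory.
Local Open Scope ring_scope.

Lemma gmulE x y : x * y = gmul x y. Proof. by []. Qed.
Lemma gaddE x y : x + y = gadd x y. Proof. by []. Qed.
Lemma goppE x : - x = gopp x. Proof. by []. Qed.
Lemma g1E : 1 = gone :> gint. Proof. by []. Qed.
Lemma g0E : 0 = gzero :> gint. Proof. by []. Qed.

Lemma gmul_eq0 (x y : gint) : x * y = 0 -> x = 0 \/ y = 0.
Proof.
case: x y => a b [c d]; rewrite gmulE g0E /gmul /gzero => [[e1 e2]].
have h : ((a^+2 + b^+2) * (c^+2+d^+2) = 0)%R.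
  have -> : ((a^+2 + b^+2) * (c^+2+d^+2) = (a*c-b*d)^+2 + (a*d+b*c)^+2)%R by ring.
  by rewrite e1 e2; ring.
move/eqP: h; rewrite mulf_eq0 => /orP [/eqP h|/eqP h].
  left; have [-> ->] : a = 0 /\ b = 0 by nia. by [].
right; have [-> ->] : c = 0 /\ d = 0 by nia. by [].
Qed.

Definition pi : gint := 1 + gI.
Lemma piE : pi = GInt 1 1. Proof. by rewrite /pi gaddE /gadd /= add0r addr0. Qed.
Lemma gIE : gI = GInt 0 1. Proof. by []. Qed.

Lemma piP x : gdvd pi x <-> ((gre x + gim x) %% 2 = 0)%Z.
Proof.
case: x => a b /=; split.
  case=> [[c d]]; rewrite piE gmulE /gmul /= => [[-> ->]]. lia.
move=> h; exists (GInt ((a+b) %/ 2)%Z ((b-a) %/ 2)%Z).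
rewrite piE gmulE /gmul /=; congr GInt; lia.
Qed.

Lemma dvd_refl x : gdvd x x. Proof. by exists 1; rewrite mulr1. Qed.
Lemma dvd_trans a b c : gdvd a b -> gdvd b c -> gdvd a c.
Proof. by move=> [k ->] [l ->]; exists (k * l); rewrite mulrA. Qed.
Lemma dvd_mulr d a b : gdvd d a -> gdvd d (a * b).
Proof. by move=> [k ->]; exists (k * b); rewrite mulrA. Qed.
Lemma dvd_mull d a b : gdvd d b -> gdvd d (a * b).
Proof. by rewrite mulrC; apply: dvd_mulr. Qed.
Lemma dvd_add d a b : gdvd d a -> gdvd d b -> gdvd d (a + b).
Proof. by move=> [k ->] [l ->]; exists (k + l); rewrite mulrDr. Qed.
Lemma dvd_opp d a : gdvd d a -> gdvd d (- a).
Proof. by move=> [k ->]; exists (- k); rewrite mulrN. Qed.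
Lemma dvd_sub d a b : gdvd d a -> gdvd d b -> gdvd d (a - b).
Proof. by move=> ha hb; apply: dvd_add => //; apply: dvd_opp. Qed.
Lemma dvd_mulrl d a : gdvd d (d * a). Proof. by exists a. Qed.
Lemma unit_dvd u d : gunit u -> gdvd d u -> gunit d.
Proof. by move=> hu hd; apply: dvd_trans hd hu. Qed.

Lemma gcancel (c x y : gint) : c <> 0 -> c * x = c * y -> x = y.
Proof.
move=> hc e; have : c * (x - y) = 0 by rewrite mulrBr e subrr.
case/gmul_eq0 => // /eqP; rewrite subr_eq0 => /eqP //.
Qed.

Lemma gmul_neq0 (x y : gint) : x <> 0 -> y <> 0 -> x * y <> 0.
Proof. by move=> hx hy /gmul_eq0 [] //. Qed.
Lemma gexp_neq0 (x : gint) n : x <> 0 -> x ^+ n <> 0.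
Proof.
move=> hx; elim: n => [|n IH]; first by rewrite expr0 g1E g0E.
by rewrite exprS; apply: gmul_neq0.
Qed.

Lemma pi_neq0 : pi <> 0. Proof. by rewrite piE g0E. Qed.

Lemma pi_prime : gprime pi.
Proof.
split; first exact: pi_neq0.
split.
  by move=> /piP; rewrite g1E /gone /=.
case=> a b [c d] /piP; rewrite gmulE /gmul /= => h.
rewrite !piP /=.
have : ((a + b) %% 2 = 0)%Z \/ ((c + d) %% 2 = 0)%Z by nia.
by [].
Qed.

Lemma inO_npi x : inO x -> ~ gdvd pi x.
Proof. by rewrite /inO piP => ->. Qed.

Lemma prime_pow p x n : gprime p -> gdvd p (x ^+ n) -> gdvd p x.
Proof.
move=> [p0 [pu pp]]; elim: n => [|n IH]; first by rewrite expr0 => h; case: pu.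
by rewrite exprS => /pp [] // /IH.
Qed.

Lemma pow_div p M N n : gprime p -> ~ gdvd p N -> gdvd (p ^+ n) (M * N) -> gdvd (p ^+ n) M.
Proof.
move=> hp hN; elim: n M => [|n IH] M; first by move=> _; exists M; rewrite expr0 mul1r.
move=> hd.
have : gdvd p (M * N) by apply: dvd_trans hd; rewrite exprS; apply: dvd_mulrl.
case: (hp) => p0 [_ pp] /pp [] // [M1 eM].
have : gdvd (p ^+ n) (M1 * N).
  case: hd => k; rewrite eM exprS -mulrA -mulrA => /(gcancel _ _ _ p0) ek.
  by exists k.
by move=> /IH [k ek]; exists k; rewrite eM ek exprS mulrA.
Qed.

Lemma unit_form u : gunit u -> exists t, (t <= 3)%N /\ u = gI ^+ t.
Proof.
case=> v; case: u v => a b [c d]; rewrite gmulE g1E /gmul /gone => [[e1 e2]].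
have h : ((a^+2 + b^+2) * (c^+2+d^+2) = 1)%R.
  have -> : ((a^+2 + b^+2) * (c^+2+d^+2) = (a*c-b*d)^+2 + (a*d+b*c)^+2)%R by ring.
  by rewrite -e1 -e2; ring.
have aux : forall A C : int, 0 <= A -> 0 <= C -> A * C = 1 -> A = 1.
  move=> A C ha hc e.
  have [h0|h0] : A = 0 \/ 1 <= A by lia.
    by move: e; rewrite h0 mul0r.
  have [h'|h'] : C = 0 \/ 1 <= C by lia.
    by move: e; rewrite h' mulr0.
  nia.
have h2 : a^+2 + b^+2 = 1.
  by apply: (aux _ (c^+2+d^+2)) => //; apply: addr_ge0; apply: sqr_ge0.
have [[-> ->]|[[-> ->]|[[-> ->]|[-> ->]]]] :
  (a = 1 /\ b = 0) \/ (a = -1 /\ b = 0) \/ (a = 0 /\ b = 1) \/ (a=0 /\ b = -1) by nia.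
- by exists 0%N.
- by exists 2%N.
- by exists 1%N.
- by exists 3%N.
Qed.

Lemma div_pow_pi d e n : ~ gdvd pi d -> d * e = pi ^+ n -> gunit d.
Proof.
move=> hd; elim: n e => [|n IH] e; first by rewrite expr0 => h; exists e.
rewrite exprS => h.
have : gdvd pi (d * e) by rewrite h; apply: dvd_mulrl.
case: pi_prime => _ [_ pp] /pp [] // [e' ee].
apply: (IH e'); apply: (gcancel _ _ _ pi_neq0).
by rewrite -h ee mulrCA.
Qed.

Lemma two_eq : 1 + 1 = pi * pi * (- gI). Proof. by rewrite piE. Qed.
Lemma gI_unit : gI * (- gI) = 1. Proof. by []. Qed.

Lemma prime_npi p : gprime p -> inO p -> ~ gdvd p pi.
Proof.
move=> [p0 [pu pp]] hO [c ec].
have : gdvd pi (p * c) by rewrite -ec; apply: dvd_refl.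
case: pi_prime => _ [_ pip] /pip [].
  by apply: inO_npi.
case=> d ed; apply: pu; exists d.
apply: (gcancel _ _ _ pi_neq0); rewrite mulr1 {1}ec ed; ring.
Qed.

Lemma prime_not_dvd_two p : gprime p -> inO p -> ~ gdvd p (1 + 1).
Proof.
move=> hp hO; rewrite two_eq => h.
case: (hp) => _ [pu pp].
have npi := prime_npi _ hp hO.
case/pp: h => [h|h].
  by case/pp: h.
apply: pu; apply: dvd_trans h _; exists gI; by [].
Qed.

Lemma prod_npi (s : seq (gint * nat)) :
  (forall pa, pa \in s -> inO pa.1) -> ~ gdvd pi (\prod_(pa <- s) pa.1 ^+ pa.2).
Proof.
elim: s => [|pa s IH] hs.
  by rewrite big_nil => /piP; rewrite g1E.
rewrite big_cons; case: pi_prime => _ [_ pp] /pp [].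
  move/(prime_pow _ _ _ pi_prime); apply: inO_npi; apply: hs; exact: mem_head.
by apply: IH => q hq; apply: hs; rewrite in_cons hq orbT.
Qed.

Lemma even_dvd x : (gre x %% 2 = 0)%Z -> (gim x %% 2 = 0)%Z -> gdvd (pi ^+ 2) x.
Proof.
case: x => a b /= ha hb; exists (GInt (b %/ 2)%Z (- (a %/ 2)%Z)).
rewrite expr2 piE !gmulE /gmul /=; congr GInt; lia.
Qed.

Ltac sp5 := split; [|split; [|split; [|split; [|split]]]].

Notation PR s := (\prod_(pa <- s) pa.1 ^+ pa.2).

Lemma split_lem (s : seq (gint * nat)) (M N R : gint) :
  (forall pa, pa \in s -> gprime pa.1) ->
  (forall pa, pa \in s -> ~ (gdvd pa.1 M /\ gdvd pa.1 N)) ->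
  M * N = R * (PR s) ^+ 2 ->
  exists s1 s2 M' N', subseq s1 s /\ subseq s2 s /\
    M = M' * (PR s1) ^+ 2 /\ N = N' * (PR s2) ^+ 2 /\ M' * N' = R /\
    PR s1 * PR s2 = PR s.
Proof.
elim: s M N => [|[p e] s IH] M N hpr hcop.
  rewrite big_nil expr1n mulr1 => h.
  by exists [::], [::], M, N; rewrite big_nil !expr1n !mulr1.
have hpr' : forall pa, pa \in s -> gprime pa.1.
  by move=> q hq; apply: hpr; rewrite in_cons hq orbT.
have hp : gprime p by apply: (hpr (p, e)); exact: mem_head.
case: (hp) => p0 [pu pp].
rewrite big_cons /= => h.
have hpe : p ^+ e <> 0 by apply: gexp_neq0.
have hpe2 : p ^+ e ^+ 2 <> 0 by apply: gexp_neq0.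
destruct e as [|e].
  have hcop' : forall pa, pa \in s -> ~ (gdvd pa.1 M /\ gdvd pa.1 N).
    by move=> q hq; apply: hcop; rewrite in_cons hq orbT.
  have h' : M * N = R * (PR s) ^+ 2 by rewrite h expr0 mul1r.
  have [s1 [s2 [M' [N' [h1 [h2 [h3 [h4 [h5 h6]]]]]]]]] := IH M N hpr' hcop' h'.
  exists s1, s2, M', N'; sp5.
  - by apply: subseq_trans h1 (subseq_cons _ _).
  - by apply: subseq_trans h2 (subseq_cons _ _).
  - exact h3.
  - exact h4.
  - exact h5.
  - by rewrite h6 expr0 mul1r.
have hcp := hcop (p, e.+1) (mem_head _ _).
have hdMN : gdvd p (M * N).
  by rewrite h; apply: dvd_mull; rewrite exprMn; apply: dvd_mulr; rewrite -exprM exprS; apply: dvd_mulrl.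
have hd2 : gdvd (p ^+ (e.+1 * 2)) (M * N).
  by rewrite h exprM; apply: dvd_mull; rewrite exprMn; apply: dvd_mulr; apply: dvd_refl.
case/pp: hdMN => hd.
  have hN : ~ gdvd p N by move=> hN; apply: hcp.
  have [M1 eM] := pow_div _ _ _ _ hp hN hd2.
  rewrite exprM in eM.
  have h' : M1 * N = R * (PR s) ^+ 2.
    apply: (gcancel _ _ _ hpe2); rewrite mulrA -eM h; ring.
  have hcop' : forall pa, pa \in s -> ~ (gdvd pa.1 M1 /\ gdvd pa.1 N).
    move=> q hq [h1 h2]; apply: (hcop q); first by rewrite in_cons hq orbT.
    by split=> //; rewrite eM; apply: dvd_mull.
  have [s1 [s2 [M' [N' [h1 [h2 [h3 [h4 [h5 h6]]]]]]]]] := IH M1 N hpr' hcop' h'.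
  exists ((p, e.+1) :: s1), s2, M', N'; sp5.
  - by rewrite /= eqxx.
  - by apply: subseq_trans h2 (subseq_cons _ _).
  - by rewrite big_cons /= eM h3; ring.
  - exact h4.
  - exact h5.
  - by rewrite big_cons /= -h6; ring.
have hM : ~ gdvd p M by move=> hM; apply: hcp.
have [N1 eN] : gdvd (p ^+ (e.+1 * 2)) N by apply: (pow_div p N M _ hp hM); rewrite mulrC.
rewrite exprM in eN.
have h' : M * N1 = R * (PR s) ^+ 2.
  apply: (gcancel _ _ _ hpe2); rewrite mulrCA -eN h; ring.
have hcop' : forall pa, pa \in s -> ~ (gdvd pa.1 M /\ gdvd pa.1 N1).
  move=> q hq [h1 h2]; apply: (hcop q); first by rewrite in_cons hq orbT.
  by split=> //; rewrite eN; apply: dvd_mull.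
have [s1 [s2 [M' [N' [h1 [h2 [h3 [h4 [h5 h6]]]]]]]]] := IH M N1 hpr' hcop' h'.
exists s1, ((p, e.+1) :: s2), M', N'; sp5.
- by apply: subseq_trans h1 (subseq_cons _ _).
- by rewrite /= eqxx.
- exact h3.
- by rewrite big_cons /= eN h4; ring.
- exact h5.
- by rewrite big_cons /= -h6; ring.
Qed.

Lemma odd_add (x y : gint) : ~ gdvd pi x -> ~ gdvd pi y -> gdvd pi (x + y).
Proof.
rewrite !piP; case: x y => a b [c d] /= h1 h2.
lia.
Qed.

Lemma unit_npi u P : gunit u -> ~ gdvd pi P -> ~ gdvd pi (u * P).
Proof.
move=> hu hP; case: pi_prime => _ [pu pp] /pp [] //.
by move=> h; apply: pu; apply: dvd_trans h hu.
Qed.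

Lemma final (X Y Z P Q a b : gint) : gcd_unit X Y -> inO X ->
  Z + X = pi ^+ 2 * a * P ^+ 2 -> Z - X = pi ^+ 2 * b * Q ^+ 2 -> a * b = 1 ->
  Y = pi ^+ 2 * (P * Q) -> inG P -> inG Q ->
  exists (t : nat) (P Q : gint),
    (t <= 3)%N /\ inG P /\ inG Q /\ no_common_prime P Q /\
    gdvd (1 + gI) (P * Q) /\
    X = gI ^+ t.+1 * (P ^+ 2 - (-1) ^+ t * Q ^+ 2) /\
    Y = (1 + gI) ^+ 2 * (P * Q) /\
    Z = gI ^+ t.+1 * (P ^+ 2 + (-1) ^+ t * Q ^+ 2).
Proof.
move=> hg hX hp hm hab hY hP hQ.
have pi2 : pi ^+ 2 <> 0 by apply: gexp_neq0; apply: pi_neq0.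
have eX : X = gI * (a * P ^+ 2 - b * Q ^+ 2).
  have : pi ^+ 2 * (- gI * X) = pi ^+ 2 * (a * P ^+ 2 - b * Q ^+ 2).
    transitivity ((1 + 1) * X); first by rewrite two_eq; ring.
    transitivity ((Z + X) - (Z - X)); first by ring.
    by rewrite hp hm; ring.
  move/(gcancel _ _ _ pi2) => <-.
  by rewrite mulrA gI_unit mul1r.
have eZ : Z = gI * (a * P ^+ 2 + b * Q ^+ 2).
  have : pi ^+ 2 * (- gI * Z) = pi ^+ 2 * (a * P ^+ 2 + b * Q ^+ 2).
    transitivity ((1 + 1) * Z); first by rewrite two_eq; ring.
    transitivity ((Z + X) + (Z - X)); first by ring.
    by rewrite hp hm; ring.
  move/(gcancel _ _ _ pi2) => <-.
  by rewrite mulrA gI_unit mul1r.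
have ua : gunit a by exists b.
have ub : gunit b by exists a; rewrite mulrC.
have [t [ht ea]] := unit_form a ua.
have eb : b = (-1) ^+ t * gI ^+ t.
  rewrite -exprNn.
  transitivity (b * (a * (- gI) ^+ t)).
    by rewrite ea -exprMn gI_unit expr1n mulr1.
  by rewrite mulrA [b * a]mulrC hab mul1r.
exists t, P, Q; split => //; split => //; split => //; split.
  move=> [p [[p0 [pu pp]] [dP dQ]]]; apply: pu; apply: hg.
    rewrite eX; apply: dvd_mull; apply: dvd_sub; apply: dvd_mull; rewrite expr2;
      apply: dvd_mull => //.
  by rewrite hY; apply: dvd_mull; apply: dvd_mull.
split.
  apply: NNPP => hn.
  have nP : ~ gdvd pi P by move=> h; apply: hn; apply: dvd_mulr.
  have nQ : ~ gdvd pi Q by move=> h; apply: hn; apply: dvd_mull.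
  have nP2 : ~ gdvd pi (P ^+ 2) by move/(prime_pow _ _ _ pi_prime).
  have nQ2 : ~ gdvd pi (Q ^+ 2) by move/(prime_pow _ _ _ pi_prime).
  apply: (inO_npi _ hX); rewrite eX; apply: dvd_mull; apply: odd_add.
    exact: unit_npi.
  by move/dvd_opp; rewrite opprK; apply: unit_npi.
split.
  rewrite eX ea eb (exprS gI t); move: (gI ^+ t) ((-1) ^+ t : gint) => g s; ring.
split; first by rewrite hY.
by rewrite eZ ea eb (exprS gI t); move: (gI ^+ t) ((-1) ^+ t : gint) => g s; ring.
Qed.

Lemma greD (x y : gint) : gre (x + y) = gre x + gre y. Proof. by []. Qed.
Lemma gimD (x y : gint) : gim (x + y) = gim x + gim y. Proof. by []. Qed.
Lemma greB (x y : gint) : gre (x - y) = gre x - gre y. Proof. by []. Qed.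
Lemma gimB (x y : gint) : gim (x - y) = gim x - gim y. Proof. by []. Qed.

Theorem theorem4p4 (X Y Z : gint) :
  X ^+ 2 + Y ^+ 2 = Z ^+ 2 ->
  gcd_unit X Y ->
  X * Y * Z <> 0 ->
  inOI X -> inOI Z ->
  (exists W : gint, inG W /\ Y = (1 + gI) ^+ 2 * W) ->
  exists (t : nat) (P Q : gint),
    (t <= 3)%N /\ inG P /\ inG Q /\ no_common_prime P Q /\
    gdvd (1 + gI) (P * Q) /\
    X = gI ^+ t.+1 * (P ^+ 2 - (-1) ^+ t * Q ^+ 2) /\
    Y = (1 + gI) ^+ 2 * (P * Q) /\
    Z = gI ^+ t.+1 * (P ^+ 2 + (-1) ^+ t * Q ^+ 2).
Proof.
move=> hXYZ hg _ hX hZ [W [[a1 [s [hu [hs eW]]]] eY]].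
have pe : 1 + gI = pi by [].
rewrite pe in eY eW.
have eY' : Y = pi ^+ 2 * pi ^+ a1 * PR s by rewrite eY eW mulrA.
have hprod : (Z + X) * (Z - X) = (pi ^+ 2 * pi ^+ a1) ^+ 2 * (PR s) ^+ 2.
  transitivity (Z ^+ 2 - X ^+ 2); first by ring.
  by rewrite -hXYZ eY'; ring.
have hYY : Y * Y = Z * Z - X * X by rewrite -!expr2 -hXYZ; ring.
have hcop : forall pa, pa \in s -> ~ (gdvd pa.1 (Z + X) /\ gdvd pa.1 (Z - X)).
  move=> pa hpa [d1 d2].
  have [hp [hO _]] := hs pa hpa.
  have hp' := hp; case: hp' => p0 [pu pp].
  have dZ : gdvd pa.1 ((1 + 1) * Z).
    have -> : (1 + 1) * Z = (Z + X) + (Z - X) by ring.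
    exact: dvd_add.
  have dX : gdvd pa.1 ((1 + 1) * X).
    have -> : (1 + 1) * X = (Z + X) - (Z - X) by ring.
    exact: dvd_sub.
  have n2 := prime_not_dvd_two _ hp hO.
  case/pp: dZ => // dZ; case/pp: dX => // dX.
  have : gdvd pa.1 (Y * Y).
    by rewrite hYY; apply: dvd_sub; apply: dvd_mulr.
  by case/pp => dY; apply: pu; apply: hg.
have hpr : forall pa, pa \in s -> gprime pa.1 by move=> pa /hs [].
have [s1 [s2 [M' [N' [h1 [h2 [hSp [hSm [h5 h6]]]]]]]]] :=
  split_lem s (Z + X) (Z - X) _ hpr hcop hprod.
have hO1 : forall pa, pa \in s1 -> inO pa.1.
  by move=> pa /(mem_subseq h1) /hs [_ []].
have hO2 : forall pa, pa \in s2 -> inO pa.1.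
  by move=> pa /(mem_subseq h2) /hs [_ []].
have nA : ~ gdvd pi ((PR s1) ^+ 2).
  by move/(prime_pow _ _ _ pi_prime); apply: prod_npi.
have nB : ~ gdvd pi ((PR s2) ^+ 2).
  by move/(prime_pow _ _ _ pi_prime); apply: prod_npi.
case: hX => hX1 hX2; case: hZ => hZ1 hZ2.
have dSp : gdvd (pi ^+ 2) (Z + X).
  apply: even_dvd; rewrite ?greD ?gimD; move: hX1 hZ1 hX2 hZ2; rewrite /inO; lia.
have dSm : gdvd (pi ^+ 2) (Z - X).
  apply: even_dvd; rewrite ?greB ?gimB; move: hX1 hZ1 hX2 hZ2; rewrite /inO; lia.
have [M'' eM] : gdvd (pi ^+ 2) M'.
  by apply: (pow_div _ _ _ _ pi_prime nA); rewrite -hSp.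
have [N'' eN] : gdvd (pi ^+ 2) N'.
  by apply: (pow_div _ _ _ _ pi_prime nB); rewrite -hSm.
have pi4 : pi ^+ 2 * pi ^+ 2 <> 0.
  by apply: gmul_neq0; apply: gexp_neq0; apply: pi_neq0.
have pi2 : pi ^+ 2 <> 0 by apply: gexp_neq0; apply: pi_neq0.
have eMN : M'' * N'' = pi ^+ (a1 * 2).
  apply: (gcancel _ _ _ pi4).
  transitivity (M' * N'); first by rewrite eM eN; ring.
  by rewrite h5 exprM; ring.
have hPR : PR s = PR s1 * PR s2 by rewrite h6.
have iG1 : forall k, inG (pi ^+ k * PR s1).
  move=> k; exists k, s1; split; last split => //.
    by apply: subseq_uniq (map_subseq _ h1) hu.
  by move=> pa /(mem_subseq h1) /hs.
have iG2 : forall k, inG (pi ^+ k * PR s2).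
  move=> k; exists k, s2; split; last split => //.
    by apply: subseq_uniq (map_subseq _ h2) hu.
  by move=> pa /(mem_subseq h2) /hs.
have nboth : ~ (gdvd pi M'' /\ gdvd pi N'').
  move=> [[m em] [n en]].
  have : pi ^+ 2 * (- gI * Z) = pi ^+ 2 * (pi * (m * PR s1 ^+ 2 + n * PR s2 ^+ 2)).
    transitivity ((1 + 1) * Z); first by rewrite two_eq; ring.
    transitivity ((Z + X) + (Z - X)); first by ring.
    by rewrite hSp hSm eM eN em en; ring.
  move/(gcancel _ _ _ pi2) => e.
  apply: (inO_npi _ hZ1).
  have -> : Z = gI * (- gI * Z) by rewrite mulrA gI_unit mul1r.
  by rewrite e; apply: dvd_mull; apply: dvd_mulrl.
case: (classic (gdvd pi M'')) => hM.
  have hN : ~ gdvd pi N'' by move=> hN; apply: nboth.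
  have [v ev] : gunit N''.
    by apply: (div_pow_pi _ M'' (a1 * 2)) => //; rewrite mulrC.
  have eM2 : M'' = v * (pi ^+ a1) ^+ 2.
    transitivity (v * (M'' * N'')); first by rewrite mulrCA [v * N'']mulrC -ev mulr1.
    by rewrite eMN exprM.
  apply: (final X Y Z (pi ^+ a1 * PR s1) (pi ^+ 0 * PR s2) v N'') => //.
  - by rewrite hSp eM eM2; ring.
  - by rewrite hSm eN; ring.
  - by rewrite mulrC.
  - by rewrite eY' hPR; ring.
have [v ev] : gunit M'' by apply: (div_pow_pi _ N'' (a1 * 2)).
have eN2 : N'' = v * (pi ^+ a1) ^+ 2.
  transitivity (v * (M'' * N'')); first by rewrite mulrA [v * M'']mulrC -ev mul1r.
  by rewrite eMN exprM.
apply: (final X Y Z (pi ^+ 0 * PR s1) (pi ^+ a1 * PR s2) M'' v) => //.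
- by rewrite hSp eM; ring.
- by rewrite hSm eN eN2; ring.
- by rewrite eY' hPR; ring.
Qed.
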